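(* A commutative semigroup variety $\mathcal V$ equals $\mathcal C_m$ for some integer $m\ge0$ if and only if $\mathcal V$ is combinatorial and, for all commutative semigroup varieties $\mathcal Y,\mathcal Z$ with $\mathcal Y$ a nil-variety and $\mathcal V=\mathcal Y\vee\mathcal Z$, one has $\mathcal V=\mathcal Z$.
   Context: For $m\ge1$, $\mathcal C_m=\operatorname{var}\{x^m=x^{m+1},\ xy=yx\}$, the variety generated by the cyclic monoid $\langle a\mid a^m=a^{m+1}\rangle$; $\mathcal C_0$ is the trivial variety. A semigroup variety is combinatorial if all groups in it are trivial; it is a nil-variety if all its semigroups are nil-semigroups. Joins are in the lattice of commutative semigroup varieties. *)

(* Defs.v *)
From Stdlib Require Import List Arith.
Import ListNotations.

Record semigroup := Semigroup {
  carrier :> Type;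
  sg_op : carrier -> carrier -> carrier;
  sg_assoc : forall x y z, sg_op x (sg_op y z) = sg_op (sg_op x y) z;
  sg_inh : carrier
}.

Definition commutative_sg (S : semigroup) : Prop :=
  forall x y : S, sg_op S x y = sg_op S y x.

(* A semigroup word over variables x_0, x_1, ...: a nonempty list of
   variables, represented as (first letter, remaining letters). *)
Definition word := (nat * list nat)%type.
Definition identity := (word * word)%type.

Definition eval_word (S : semigroup) (f : nat -> S) (w : word) : S :=
  fold_left (fun acc i => sg_op S acc (f i)) (snd w) (f (fst w)).

Definition satisfies (S : semigroup) (e : identity) : Prop :=
  forall f : nat -> S, eval_word S f (fst e) = eval_word S f (snd e).

(* A commutative semigroup variety is given by a set of defining identities
   (together with xy = yx, which is built into membership). *)
Definition cvariety := identity -> Prop.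

Definition inV (V : cvariety) (S : semigroup) : Prop :=
  commutative_sg S /\ forall e, V e -> satisfies S e.

Definition veq (V W : cvariety) : Prop :=
  forall S : semigroup, inV V S <-> inV W S.

(* Join in the lattice of commutative semigroup varieties: the variety
   defined by all identities holding in both (= var(Y u Z), by Birkhoff). *)
Definition vjoin (Y Z : cvariety) : cvariety :=
  fun e => (forall S, inV Y S -> satisfies S e) /\ (forall S, inV Z S -> satisfies S e).

(* x^n as a word: x_0 repeated n times (n >= 1). *)
Definition xpow (n : nat) : word := (0, repeat 0 (n - 1)).

(* C_m = var{x^m = x^{m+1}, xy = yx} for m >= 1; C_0 = trivial variety (x = y). *)
Definition Cvar (m : nat) : cvariety :=
  fun e => match m with
           | 0 => e = ((0, []), (1, []))
           | _ => e = (xpow m, xpow (Datatypes.S m))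
           end.

Definition is_group (S : semigroup) : Prop :=
  exists u : S, (forall x : S, sg_op S u x = x /\ sg_op S x u = x) /\
    (forall x : S, exists y : S, sg_op S x y = u /\ sg_op S y x = u).

Definition trivial_sg (S : semigroup) : Prop := forall x y : S, x = y.

Definition combinatorial (V : cvariety) : Prop :=
  forall S, inV V S -> is_group S -> trivial_sg S.

(* x^n for n >= 1: spow S x n = x^(n+1) *)
Fixpoint spow (T : semigroup) (x : T) (n : nat) : T :=
  match n with
  | 0 => x
  | Datatypes.S k => sg_op T (spow T x k) x
  end.

Definition nil_sg (S : semigroup) : Prop :=
  exists z : S, (forall x : S, sg_op S z x = z /\ sg_op S x z = z) /\
    (forall x : S, exists n, spow S x n = z).

Definition nil_variety (V : cvariety) : Prop := forall S, inV V S -> nil_sg S.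

(* Main.v *)
Require Import Defs.
From Stdlib Require Import List Arith Lia ZArith Classical ClassicalEpsilon FunctionalExtensionality ProofIrrelevance.
Import ListNotations.

Section S1.
Variable S : semigroup.

Definition op1 (a b : option S) : option S :=
  match a, b with
  | None, _ => b
  | _, None => a
  | Some x, Some y => Some (sg_op S x y)
  end.

Arguments op1 : simpl never.

Lemma op1_assoc a b c : op1 a (op1 b c) = op1 (op1 a b) c.
Proof. destruct a, b, c; unfold op1; simpl; auto. f_equal; apply sg_assoc. Qed.

Lemma op1_Nl a : op1 None a = a. Proof. reflexivity. Qed.
Lemma op1_Nr a : op1 a None = a. Proof. destruct a; reflexivity. Qed.
Lemma op1_SS x y : op1 (Some x) (Some y) = Some (sg_op S x y). Proof. reflexivity. Qed.

Definition pw (g : S) (n : nat) : option S :=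
  match n with 0 => None | Datatypes.S n' => Some (spow S g n') end.

Lemma pw_S g n : pw g (Datatypes.S n) = op1 (pw g n) (Some g).
Proof. destruct n; reflexivity. Qed.

Lemma pw_add g a b : pw g (a + b) = op1 (pw g a) (pw g b).
Proof.
  induction b. rewrite Nat.add_0_r, op1_Nr; auto.
  rewrite Nat.add_succ_r, !pw_S, IHb, op1_assoc; auto.
Qed.

Definition lprod (f : nat -> S) (l : list nat) : option S :=
  fold_right (fun i r => op1 (Some (f i)) r) None l.

Lemma fold_some f l a :
  Some (fold_left (fun acc i => sg_op S acc (f i)) l a) = op1 (Some a) (lprod f l).
Proof.
  revert a; induction l; intros. reflexivity.
  cbn [fold_left]. rewrite IHl. unfold lprod; cbn [fold_right]. rewrite op1_assoc. reflexivity.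
Qed.

Definition letters (w : word) := fst w :: snd w.

Lemma eval_lprod f w : Some (eval_word S f w) = lprod f (letters w).
Proof. unfold eval_word, letters. rewrite fold_some. reflexivity. Qed.

Fixpoint cprod (g : nat -> S) (c : nat -> nat) (N : nat) : option S :=
  match N with
  | 0 => None
  | Datatypes.S N' => op1 (cprod g c N') (pw (g N') (c N'))
  end.

Lemma cprod_ext g c c' N : (forall i, i < N -> c i = c' i) -> cprod g c N = cprod g c' N.
Proof.
  induction N; intros H; simpl; auto.
  rewrite IHN by (intros; apply H; lia). rewrite H by lia. auto.
Qed.

Hypothesis Scomm : commutative_sg S.

Lemma op1_comm a b : op1 a b = op1 b a.
Proof. destruct a, b; unfold op1; simpl; auto. f_equal; apply Scomm. Qed.

Lemma cprod_bump g c c' x N : x < N -> c' x = Datatypes.S (c x) ->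
  (forall i, i <> x -> c' i = c i) ->
  cprod g c' N = op1 (Some (g x)) (cprod g c N).
Proof.
  induction N; intros Hx H1 H2. lia.
  simpl. destruct (Nat.eq_dec x N).
  - subst. rewrite (cprod_ext g c' c) by (intros; apply H2; lia).
    rewrite H1, pw_S.
    rewrite (op1_comm (pw _ _) (Some _)), !op1_assoc, (op1_comm _ (Some _)). reflexivity.
  - rewrite IHN by (auto; lia). rewrite H2 by auto. rewrite op1_assoc. reflexivity.
Qed.

Definition cnt (w : word) (i : nat) := count_occ Nat.eq_dec (letters w) i.

Lemma lprod_cprod g l N : Forall (fun x => x < N) l ->
  lprod g l = cprod g (fun i => count_occ Nat.eq_dec l i) N.
Proof.
  induction l; intros H; simpl.
  - induction N; cbn [cprod]; auto. rewrite <- IHN by constructor. reflexivity.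
  - inversion H; subst. rewrite IHl by auto.
    symmetry. apply cprod_bump; auto.
    + destruct (Nat.eq_dec a a); [reflexivity|congruence].
    + intros i Hi. destruct (Nat.eq_dec a i); [congruence|reflexivity].
Qed.

Lemma cprod_t g a b t N :
  (forall i, i < N -> op1 t (pw (g i) (a i)) = op1 t (pw (g i) (b i))) ->
  op1 t (cprod g a N) = op1 t (cprod g b N).
Proof.
  induction N; intros H; simpl; auto.
  rewrite !op1_assoc, IHN by (intros; apply H; lia).
  rewrite <- !op1_assoc, (op1_comm (cprod _ _ _)), !op1_assoc, H by lia.
  rewrite <- !op1_assoc, (op1_comm (pw _ _) (cprod _ _ _)). reflexivity.
Qed.

Lemma cprod_absorb g c t N :
  (forall i, i < N -> op1 t (pw (g i) (c i)) = t) -> op1 t (cprod g c N) = t.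
Proof.
  induction N; intros H; simpl. apply op1_Nr.
  rewrite op1_assoc, IHN by (intros; apply H; lia). apply H; lia.
Qed.

Lemma cprod_single g c t N i : i < N ->
  (forall j, j < N -> j <> i -> op1 t (pw (g j) (c j)) = t) ->
  op1 t (cprod g c N) = op1 t (pw (g i) (c i)).
Proof.
  induction N; intros Hi H; simpl. lia.
  destruct (Nat.eq_dec i N).
  - subst. rewrite op1_assoc, cprod_absorb; auto.
    intros; apply H; lia.
  - rewrite op1_assoc, IHN by (auto; try lia; intros; apply H; lia).
    rewrite <- op1_assoc, (op1_comm (pw _ _)), op1_assoc, H by lia. reflexivity.
Qed.

Fixpoint lmax (l : list nat) := match l with nil => 0 | x :: l => Nat.max x (lmax l) end.
Lemma lmax_lt l N : lmax l < N -> Forall (fun x => x < N) l.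
Proof. induction l; simpl; intros; constructor; try lia. apply IHl; lia. Qed.

Definition bnd (u v : word) := Datatypes.S (Nat.max (lmax (letters u)) (lmax (letters v))).

Lemma eval_cprod g w N : lmax (letters w) < N ->
  Some (eval_word S g w) = cprod g (cnt w) N.
Proof. intros. rewrite eval_lprod. apply lprod_cprod, lmax_lt; auto. Qed.

Lemma sat_counts (g : nat -> S) (u v : word) (t : option S) :
  (forall i, op1 t (pw (g i) (cnt u i)) = op1 t (pw (g i) (cnt v i))) ->
  op1 t (Some (eval_word S g u)) = op1 t (Some (eval_word S g v)).
Proof.
  intros H. rewrite (eval_cprod g u (bnd u v)), (eval_cprod g v (bnd u v))
    by (unfold bnd; lia).
  apply cprod_t; auto.
Qed.

End S1.

Arguments op1 {S} : simpl never.
Arguments pw {S}.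
Arguments cprod {S}.

Lemma fold_rep (S : semigroup) (f : nat -> S) n k :
  fold_left (fun acc i => sg_op S acc (f i)) (repeat 0 n) (spow S (f 0) k) = spow S (f 0) (k + n).
Proof.
  revert k; induction n; intros k; simpl. rewrite Nat.add_0_r; auto.
  change (sg_op S (spow S (f 0) k) (f 0)) with (spow S (f 0) (Datatypes.S k)).
  rewrite IHn. f_equal. lia.
Qed.

Lemma eval_rep (S : semigroup) (f : nat -> S) n :
  eval_word S f (0, repeat 0 n) = spow S (f 0) n.
Proof. unfold eval_word; simpl. apply (fold_rep S f n 0). Qed.

Lemma lprod_app (S : semigroup) f l1 l2 : lprod S f (l1 ++ l2) = op1 (lprod S f l1) (lprod S f l2).
Proof.
  induction l1; simpl. reflexivity.
  unfold lprod in *; simpl. rewrite IHl1, op1_assoc. reflexivity.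
Qed.

Definition wapp (u t : word) : word := (fst u, snd u ++ letters t).

Lemma eval_wapp (S : semigroup) f u t :
  eval_word S f (wapp u t) = sg_op S (eval_word S f u) (eval_word S f t).
Proof.
  assert (H : Some (eval_word S f (wapp u t)) = Some (sg_op S (eval_word S f u) (eval_word S f t))).
  { rewrite eval_lprod. unfold wapp, letters; simpl.
    change (op1 (Some (f (fst u))) (lprod S f (snd u ++ fst t :: snd t)) =
            Some (sg_op S (eval_word S f u) (eval_word S f t))).
    rewrite lprod_app, op1_assoc, <- op1_SS.
    change (op1 (Some (f (fst u))) (lprod S f (snd u))) with (lprod S f (letters u)).
    change (lprod S f (fst t :: snd t)) with (lprod S f (letters t)).
    rewrite <- !eval_lprod. reflexivity. }
  injection H; auto.
Qed.

Lemma cnt_wapp u t i : cnt (wapp u t) i = cnt u i + cnt t i.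
Proof.
  unfold cnt, wapp, letters.
  change (fst (fst u, snd u ++ fst t :: snd t) :: snd (fst u, snd u ++ fst t :: snd t))
    with ((fst u :: snd u) ++ (fst t :: snd t)).
  rewrite count_occ_app. reflexivity.
Qed.

Lemma cnt_rep k n i : i <> k -> cnt (k, repeat k n) i = 0.
Proof.
  intros H. unfold cnt, letters; simpl. destruct (Nat.eq_dec k i). congruence.
  induction n; simpl; auto. destruct (Nat.eq_dec k i); congruence.
Qed.

Lemma pw_stab (S : semigroup) (g : S) j : pw g j = pw g (Datatypes.S j) ->
  forall a, j <= a -> pw g a = pw g j.
Proof.
  intros H a Ha. induction Ha; auto.
  rewrite pw_S, IHHa, <- pw_S; auto.
Qed.

Lemma trunc_sat (S : semigroup) j (u v : word) : commutative_sg S -> 1 <= j ->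
  (forall g : S, pw g j = pw g (Datatypes.S j)) ->
  (forall i, Nat.min (cnt u i) j = Nat.min (cnt v i) j) ->
  satisfies S (u, v).
Proof.
  intros Hc Hj Hp Ht f. simpl.
  assert (E := sat_counts S Hc f u v None).
  rewrite !op1_Nl in E. injection E; auto. intros i. rewrite !op1_Nl.
  specialize (Ht i).
  destruct (Nat.lt_ge_cases (cnt u i) j).
  - assert (cnt u i = cnt v i) by lia. congruence.
  - rewrite (pw_stab S (f i) j (Hp _) (cnt u i)) by lia.
    rewrite (pw_stab S (f i) j (Hp _) (cnt v i)) by lia. reflexivity.
Qed.

Lemma Cvar_pw (S : semigroup) j : 1 <= j -> inV (Cvar j) S -> forall g : S, pw g j = pw g (Datatypes.S j).
Proof.
  intros Hj [_ H] g. destruct j. lia.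
  specialize (H _ eq_refl (fun _ => g)). simpl in H. unfold xpow in H.
  rewrite !eval_rep in H. simpl in H |- *. rewrite Nat.sub_0_r in H. f_equal; exact H.
Qed.

Lemma pw_Cvar (S : semigroup) j : 1 <= j -> commutative_sg S ->
  (forall g : S, pw g j = pw g (Datatypes.S j)) -> inV (Cvar j) S.
Proof.
  intros Hj Hc H. split; auto. intros e He. destruct j. lia.
  simpl in He; subst. intros f. simpl. unfold xpow. rewrite !eval_rep.
  specialize (H (f 0)). simpl in H |- *. rewrite Nat.sub_0_r. injection H; auto.
Qed.

Lemma trivial_sat (S : semigroup) e : trivial_sg S -> satisfies S e.
Proof. intros H f; apply H. Qed.

Lemma Cvar0_trivial (S : semigroup) : inV (Cvar 0) S -> trivial_sg S.
Proof.
  intros [_ H] x y. specialize (H _ eq_refl (fun i => match i with 0 => x | _ => y end)).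
  exact H.
Qed.

Lemma trivial_Cvar0 (S : semigroup) : trivial_sg S -> inV (Cvar 0) S.
Proof. intros H. split. intros x y; apply H. intros; apply trivial_sat; auto. Qed.

(* ---------- the semigroups N_j = <a | a^j = a^{j+1}> (as {0..j}, capped addition) ---------- *)
Definition Nc (j : nat) := {n : nat | n <= j}.
Definition Nop j (a b : Nc j) : Nc j :=
  exist _ (Nat.min (proj1_sig a + proj1_sig b) j) (Nat.le_min_r _ _).
Lemma Nc_eq j (a b : Nc j) : proj1_sig a = proj1_sig b -> a = b.
Proof. destruct a, b; simpl; intros; subst. f_equal. apply proof_irrelevance. Qed.
Lemma Nop_assoc j (a b c : Nc j) : Nop j a (Nop j b c) = Nop j (Nop j a b) c.
Proof. apply Nc_eq. destruct a, b, c; simpl. lia. Qed.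
Definition Nsg (j : nat) : semigroup := Semigroup (Nc j) (Nop j) (Nop_assoc j) (exist _ 0 (Nat.le_0_l j)).

Lemma Nsg_comm j : commutative_sg (Nsg j).
Proof. intros a b. apply Nc_eq. simpl. lia. Qed.

Definition lsumN j (f : nat -> Nc j) (l : list nat) := fold_right (fun i r => proj1_sig (f i) + r) 0 l.

Lemma Nsg_fold j (f : nat -> Nc j) l (a : Nc j) :
  proj1_sig (fold_left (fun acc i => sg_op (Nsg j) acc (f i)) l a) = Nat.min (proj1_sig a + lsumN j f l) j.
Proof.
  revert a; induction l as [|x l IHl]; intros a; simpl. destruct a; simpl; lia.
  rewrite IHl. simpl. lia.
Qed.

Lemma Nsg_eval j (f : nat -> Nc j) w :
  proj1_sig (eval_word (Nsg j) f w) = Nat.min (lsumN j f (letters w)) j.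
Proof. unfold eval_word. rewrite Nsg_fold. reflexivity. Qed.

Lemma Nsg_spow j (g : Nc j) n : proj1_sig (spow (Nsg j) g n) = Nat.min (Datatypes.S n * proj1_sig g) j.
Proof.
  induction n; simpl. destruct g; simpl; lia.
  rewrite IHn. destruct g as [x Hx]; simpl. nia.
Qed.

Lemma Nsg_pw j : 1 <= j -> forall g : Nsg j, pw g j = pw g (Datatypes.S j).
Proof.
  intros Hj g. destruct j. lia. simpl. f_equal. apply Nc_eq.
  change (proj1_sig (spow (Nsg (Datatypes.S j)) g j) = proj1_sig (spow (Nsg (Datatypes.S j)) g (Datatypes.S j))).
  rewrite !Nsg_spow. destruct g as [x Hx]; simpl. destruct x; nia.
Qed.

Lemma Nsg_C j : 1 <= j -> inV (Cvar j) (Nsg j).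
Proof. intros Hj. apply pw_Cvar; auto. apply Nsg_comm. apply Nsg_pw; auto. Qed.

Lemma Nsg0_trivial : trivial_sg (Nsg 0).
Proof. intros a b. apply Nc_eq. destruct a, b; simpl; lia. Qed.

Definition indN j (i : nat) : nat -> Nc j :=
  fun x => exist _ (Nat.min (if Nat.eq_dec x i then 1 else 0) j) (Nat.le_min_r _ _).

Lemma lsum_ind j i l : 1 <= j -> lsumN j (indN j i) l = count_occ Nat.eq_dec l i.
Proof.
  intros Hj. induction l; simpl; auto. rewrite IHl.
  destruct (Nat.eq_dec a i); simpl; try lia. destruct j; lia.
Qed.

Lemma Nsg_trunc j u v : 1 <= j -> satisfies (Nsg j) (u, v) ->
  forall i, Nat.min (cnt u i) j = Nat.min (cnt v i) j.
Proof.
  intros Hj H i. specialize (H (indN j i)). simpl in H.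
  apply (f_equal (@proj1_sig _ _)) in H. rewrite !Nsg_eval, !lsum_ind in H; auto.
Qed.

Section Prod.
Variable F : nat -> semigroup.
Definition Pop (a b : forall i, F i) : forall i, F i := fun i => sg_op (F i) (a i) (b i).
Lemma Pop_assoc a b c : Pop a (Pop b c) = Pop (Pop a b) c.
Proof. apply functional_extensionality_dep; intros i. unfold Pop. apply sg_assoc. Qed.
Definition Psg : semigroup := Semigroup (forall i, F i) Pop Pop_assoc (fun i => sg_inh (F i)).

Lemma Psg_fold (h : nat -> Psg) l a i :
  (fold_left (fun acc x => sg_op Psg acc (h x)) l a) i =
  fold_left (fun acc x => sg_op (F i) acc (h x i)) l (a i).
Proof. revert a; induction l; intros; simpl; auto. Qed.

Lemma Psg_eval (h : nat -> Psg) w i : eval_word Psg h w i = eval_word (F i) (fun x => h x i) w.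
Proof. unfold eval_word. apply Psg_fold. Qed.

Lemma Psg_in (Y : cvariety) : (forall i, inV Y (F i)) -> inV Y Psg.
Proof.
  intros H. split.
  - intros a b. apply functional_extensionality_dep; intros i. apply (proj1 (H i)).
  - intros e He h. apply functional_extensionality_dep; intros i. rewrite !Psg_eval.
    apply (proj2 (H i)); auto.
Qed.

Lemma Psg_spow (x : Psg) n i : spow Psg x n i = spow (F i) (x i) n.
Proof. induction n; simpl; auto. unfold Pop. rewrite IHn. reflexivity. Qed.
End Prod.

Lemma nil_bound (Y : cvariety) : nil_variety Y -> exists n, forall T, inV Y T ->
  forall x y : T, sg_op T (spow T x n) y = spow T x n.
Proof.
  intros HY. apply NNPP; intros H.
  assert (H0 : forall n, exists T : semigroup, inV Y T /\
     exists p : T * T, sg_op T (spow T (fst p) n) (snd p) <> spow T (fst p) n).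
  { intros n. apply NNPP; intros H'. apply H. exists n. intros T HT x y.
    apply NNPP; intros Hn. apply H'. exists T; split; auto. exists (x, y); auto. }
  pose (c := fun n => constructive_indefinite_description _ (H0 n)).
  pose (F := fun n => proj1_sig (c n)).
  assert (HF : forall n, inV Y (F n) /\ exists p : F n * F n,
     sg_op (F n) (spow (F n) (fst p) n) (snd p) <> spow (F n) (fst p) n).
  { intros n. exact (proj2_sig (c n)). }
  pose (d := fun n => constructive_indefinite_description _ (proj2 (HF n))).
  assert (HP : inV Y (Psg F)) by (apply Psg_in; intros; apply HF).
  destruct (HY _ HP) as [z [Hz Hn]].
  pose (xs := (fun n => fst (proj1_sig (d n))) : Psg F).
  pose (ys := (fun n => snd (proj1_sig (d n))) : Psg F).
  destruct (Hn xs) as [k Hk].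
  destruct (Hz ys) as [Hzy _].
  apply (proj2_sig (d k)).
  assert (E := f_equal (fun g => g k) Hzy). simpl in E. unfold Pop in E.
  rewrite <- Hk in E. rewrite Psg_spow in E. exact E.
Qed.

Lemma fold_repk (S : semigroup) (f : nat -> S) k n a :
  fold_left (fun acc i => sg_op S acc (f i)) (repeat k n) (spow S (f k) a) = spow S (f k) (a + n).
Proof.
  revert a; induction n; intros a; simpl. rewrite Nat.add_0_r; auto.
  change (sg_op S (spow S (f k) a) (f k)) with (spow S (f k) (Datatypes.S a)).
  rewrite IHn. f_equal. lia.
Qed.

Lemma eval_repk (S : semigroup) (f : nat -> S) k n :
  eval_word S f (k, repeat k n) = spow S (f k) n.
Proof. unfold eval_word; simpl. apply (fold_repk S f k n 0). Qed.

Lemma comb_C m S : inV (Cvar m) S -> is_group S -> trivial_sg S.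
Proof.
  intros HS [u [Hu Hinv]]. destruct m. apply Cvar0_trivial; auto.
  assert (Hp := Cvar_pw S (Datatypes.S m) ltac:(lia) HS). destruct HS as [Hc _].
  assert (Hall : forall g, g = u).
  { intros g. specialize (Hp g). simpl in Hp. injection Hp; intros E.
    destruct (Hinv (spow S g m)) as [y [Hy _]].
    rewrite <- Hy. rewrite E at 1. rewrite <- sg_assoc, (Hc g y), sg_assoc, Hy. symmetry; apply Hu. }
  intros x y. rewrite (Hall x), (Hall y). auto.
Qed.

Lemma forward (V : cvariety) m : veq V (Cvar m) ->
  combinatorial V /\
  (forall Y Z : cvariety, nil_variety Y -> veq V (vjoin Y Z) -> veq V Z).
Proof.
  intros HV. split.
  { intros S HS Hg. apply (comb_C m); auto. apply HV; auto. }
  intros Y Z HY HJ S. split.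
  2:{ intros HZ. apply HJ. split. apply HZ. intros e [_ He]. apply He; auto. }
  intros HS. apply HV in HS.
  destruct m.
  { apply Cvar0_trivial in HS. split. intros x y; apply HS. intros; apply trivial_sat; auto. }
  split. apply HS.
  intros [u v] He. apply (trunc_sat S (Datatypes.S m)). apply HS. lia. apply Cvar_pw; auto; lia.
  intros i. apply NNPP; intros Hne.
  destruct (nil_bound Y HY) as [n Hn].
  set (t := (Datatypes.S i, repeat (Datatypes.S i) n) : word).
  assert (Hj : vjoin Y Z (wapp u t, wapp v t)).
  { split.
    - intros T HT f. simpl. rewrite !eval_wapp. unfold t. rewrite eval_repk.
      assert (Hc := proj1 HT). rewrite (Hc _ (spow T _ n)), (Hc (eval_word T f v) (spow T _ n)), !Hn; auto.
    - intros T HT f. simpl. rewrite !eval_wapp. f_equal. apply (proj2 HT _ He). }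
  assert (HN : inV (vjoin Y Z) (Nsg (Datatypes.S m))).
  { apply HJ, HV, Nsg_C. lia. }
  apply Hne. assert (E := Nsg_trunc (Datatypes.S m) _ _ ltac:(lia) (proj2 HN _ Hj) i).
  rewrite !cnt_wapp in E. unfold t in E. rewrite !cnt_rep in E by lia.
  rewrite !Nat.add_0_r in E. exact E.
Qed.

Section Sub.
Variable S : semigroup.
Variable P : S -> Prop.
Hypothesis Pop_closed : forall x y, P x -> P y -> P (sg_op S x y).
Variable x0 : S.
Hypothesis Px0 : P x0.
Definition Sop (a b : {x : S | P x}) : {x : S | P x} :=
  exist _ (sg_op S (proj1_sig a) (proj1_sig b)) (Pop_closed _ _ (proj2_sig a) (proj2_sig b)).
Lemma sub_eq (a b : {x : S | P x}) : proj1_sig a = proj1_sig b -> a = b.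
Proof. destruct a, b; simpl; intros; subst. f_equal. apply proof_irrelevance. Qed.
Lemma Sop_assoc a b c : Sop a (Sop b c) = Sop (Sop a b) c.
Proof. apply sub_eq; simpl. apply sg_assoc. Qed.
Definition Ssg : semigroup := Semigroup {x : S | P x} Sop Sop_assoc (exist _ x0 Px0).

Lemma Ssg_fold (h : nat -> Ssg) l a :
  proj1_sig (fold_left (fun acc x => sg_op Ssg acc (h x)) l a) =
  fold_left (fun acc x => sg_op S acc (proj1_sig (h x))) l (proj1_sig a).
Proof. revert a; induction l; intros; simpl; auto. Qed.

Lemma Ssg_in (V : cvariety) : inV V S -> inV V Ssg.
Proof.
  intros [Hc H]. split.
  - intros a b. apply sub_eq. simpl. apply Hc.
  - intros e He h. apply sub_eq. unfold eval_word. rewrite !Ssg_fold. apply (H e He).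
Qed.
End Sub.

Lemma Zsg_assoc (x y z : Z) : Z.add x (Z.add y z) = Z.add (Z.add x y) z.
Proof. apply Z.add_assoc. Qed.
Definition Zsg : semigroup := Semigroup Z Z.add Zsg_assoc 0%Z.

Lemma Zsg_comm : commutative_sg Zsg.
Proof. intros x y; apply Z.add_comm. Qed.

Lemma Zsg_in (V : cvariety) : (forall u v, V (u, v) -> forall i, cnt u i = cnt v i) -> inV V Zsg.
Proof.
  intros H. split. apply Zsg_comm. intros [u v] He f. simpl.
  assert (E := sat_counts Zsg Zsg_comm f u v None).
  rewrite !op1_Nl in E. injection E; auto. intros i. rewrite !op1_Nl. rewrite (H u v He i). auto.
Qed.

Lemma Zsg_group : is_group Zsg.
Proof.
  exists 0%Z. split. intros x; simpl; split; lia.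
  intros x. exists (Z.opp x). simpl; split; lia.
Qed.

Definition wsum (wt : nat -> nat) (l : list nat) := fold_right (fun x r => wt x + r) 0 l.

Lemma lprod_w (S : semigroup) (g : S) wt l : (forall x, 1 <= wt x) ->
  lprod S (fun x => spow S g (wt x - 1)) l = pw g (wsum wt l).
Proof.
  intros Hw. induction l; simpl. reflexivity.
  unfold lprod in *; simpl. rewrite IHl.
  replace (Some (spow S g (wt a - 1))) with (pw g (wt a)).
  rewrite <- pw_add; auto. specialize (Hw a). destruct (wt a). lia. simpl. rewrite Nat.sub_0_r. auto.
Qed.

Lemma wsum1 l : wsum (fun _ => 1) l = length l.
Proof. induction l; simpl; auto. Qed.

Lemma wsum2 i l : wsum (fun x => if Nat.eq_dec x i then 2 else 1) l = length l + count_occ Nat.eq_dec l i.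
Proof. induction l; simpl; auto. rewrite IHl. destruct (Nat.eq_dec a i); simpl; lia. Qed.

Lemma eval_w (S : semigroup) (g : S) wt w : (forall x, 1 <= wt x) ->
  Some (eval_word S (fun x => spow S g (wt x - 1)) w) = pw g (wsum wt (letters w)).
Proof. intros; rewrite eval_lprod; apply lprod_w; auto. Qed.

Lemma unbal u v i : cnt u i <> cnt v i -> exists A B, A <> B /\ 1 <= A /\ 1 <= B /\
  forall (S : semigroup), satisfies S (u, v) -> forall g : S, pw g A = pw g B.
Proof.
  intros Hne.
  destruct (Nat.eq_dec (length (letters u)) (length (letters v))) as [Hl|Hl].
  - exists (wsum (fun x => if Nat.eq_dec x i then 2 else 1) (letters u)),
           (wsum (fun x => if Nat.eq_dec x i then 2 else 1) (letters v)).
    rewrite !wsum2. unfold cnt in Hne.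
    assert (1 <= length (letters u)) by (simpl; lia).
    assert (1 <= length (letters v)) by (simpl; lia).
    split. lia. split. lia. split. lia.
    intros S HS g. rewrite <- !wsum2.
    rewrite <- !eval_w by (intros; destruct (Nat.eq_dec x i); lia).
    f_equal. apply HS.
  - exists (wsum (fun _ => 1) (letters u)), (wsum (fun _ => 1) (letters v)).
    rewrite !wsum1.
    assert (1 <= length (letters u)) by (simpl; lia).
    assert (1 <= length (letters v)) by (simpl; lia). split. lia. split. lia. split. lia.
    intros S HS g. rewrite <- !wsum1.
    rewrite <- !eval_w by (intros; lia). f_equal. apply HS.
Qed.

Lemma collapse (V : cvariety) (S : semigroup) (g : S) A d : combinatorial V -> inV V S ->
  1 <= A -> 1 <= d -> pw g A = pw g (A + d) -> pw g A = pw g (Datatypes.S A).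
Proof.
  intros Hcomb HS HA Hd Hper.
  assert (Hc := proj1 HS).
  pose (P := fun x : S => exists i, Some x = pw g (A + i)).
  assert (Pcl : forall x y, P x -> P y -> P (sg_op S x y)).
  { intros x y [i Hi] [j Hj]. exists (i + A + j). rewrite <- op1_SS, Hi, Hj, <- pw_add. f_equal. lia. }
  assert (Hmk : forall n, A <= n -> { x : S | P x /\ Some x = pw g n }).
  { intros n Hn. exists (spow S g (n - 1)). assert (E : Some (spow S g (n - 1)) = pw g n).
    { destruct n. lia. simpl. rewrite Nat.sub_0_r; auto. }
    split; auto. exists (n - A). rewrite E. f_equal. lia. }
  destruct (Hmk A (le_n A)) as [x0 [Px0 Ex0]].
  pose (G := Ssg S P Pcl x0 Px0).
  assert (HG : inV V G) by (apply Ssg_in; auto).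
  assert (per : forall c k, pw g (A + c + k * d) = pw g (A + c)).
  { intros c k. induction k. f_equal; lia.
    replace (A + c + Datatypes.S k * d) with (A + d + (c + k * d)) by lia.
    rewrite pw_add, <- Hper, <- pw_add. rewrite <- IHk. f_equal. lia. }
  assert (HAd : A <= A * d) by (clear - Hd; nia).
  destruct (Hmk (A * d) HAd) as [e [Pe Ee]].
  assert (Hgrp : is_group G).
  { exists (exist _ e Pe). split.
    - intros [x [i Hi]]. assert (E : sg_op S e x = x).
      { apply (f_equal (fun o => match o with Some z => z | None => x end)) with
          (x := op1 (Some e) (Some x)) (y := Some x).
        rewrite Ee, Hi, <- pw_add.
        replace (A * d + (A + i)) with (A + i + A * d) by lia. apply per. }
      split; apply sub_eq; simpl; auto. rewrite Hc; auto.
    - intros [x [i Hi]].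
      assert (Hle : A <= A + (d - 1) * (2 * A + i)) by apply Nat.le_add_r.
      destruct (Hmk _ Hle) as [y [Py Ey]].
      assert (E : sg_op S x y = e).
      { apply (f_equal (fun o => match o with Some z => z | None => x end)) with
          (x := op1 (Some x) (Some y)) (y := Some e).
        rewrite Ey, Hi, Ee, <- pw_add.
        replace (A + i + (A + (d - 1) * (2 * A + i))) with (A + (A * d - A) + (A + i) * d) by (clear - Hd HA; nia).
        rewrite per. f_equal. clear - Hd HA; nia. }
      exists (exist _ y Py). split; apply sub_eq; simpl; auto. rewrite Hc; auto. }
  assert (Hle1 : A <= Datatypes.S A) by lia.
  destruct (Hmk _ Hle1) as [x1 [Px1 Ex1]].
  assert (T := Hcomb G HG Hgrp (exist _ x0 Px0) (exist _ x1 Px1)).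
  apply (f_equal (@proj1_sig _ _)) in T. simpl in T. subst. congruence.
Qed.

Lemma period (V : cvariety) : combinatorial V ->
  exists m, 1 <= m /\ forall S, inV V S -> forall g : S, pw g m = pw g (Datatypes.S m).
Proof.
  intros Hcomb.
  assert (H : exists u v i, V (u, v) /\ cnt u i <> cnt v i).
  { apply NNPP; intros H.
    assert (HZ : inV V Zsg).
    { apply Zsg_in. intros u v He i. apply NNPP; intros Hn. apply H. exists u, v, i; auto. }
    assert (E := Hcomb Zsg HZ Zsg_group 0%Z 1%Z). discriminate. }
  destruct H as [u [v [i [He Hne]]]].
  destruct (unbal u v i Hne) as [A [B [HAB [HA [HB Hpw]]]]].
  destruct (Nat.lt_total A B) as [Hlt|[Heq|Hlt]]; [|contradiction|].
  - exists A. split; auto. intros S HS g. apply (collapse V S g A (B - A)); auto. lia.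
    replace (A + (B - A)) with B by lia. apply (Hpw S (proj2 HS _ He)).
  - exists B. split; auto. intros S HS g. apply (collapse V S g B (A - B)); auto. lia.
    replace (B + (A - B)) with A by lia. symmetry. apply (Hpw S (proj2 HS _ He)).
Qed.

Lemma find_k (Q : nat -> Prop) m : Q 0 -> exists k, k <= m /\ Q k /\ (k = m \/ ~ Q (Datatypes.S k)).
Proof.
  intros H0. induction m.
  - exists 0. auto.
  - destruct IHm as [k [Hk [Qk [E|N]]]].
    + subst k. destruct (classic (Q (Datatypes.S m))).
      * exists (Datatypes.S m). auto.
      * exists m. auto.
    + exists k. auto.
Qed.

Lemma idem_pw (S : semigroup) (f : S) c : sg_op S f f = f -> op1 (Some f) (pw f c) = Some f.
Proof.
  intros Hf. induction c. apply op1_Nr.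
  rewrite pw_S, op1_assoc, IHc, op1_SS, Hf. reflexivity.
Qed.

Lemma F_add (S : semigroup) (f s : S) a c :
  op1 (Some f) (pw s (a + c)) = op1 (op1 (Some f) (pw s a)) (pw s c).
Proof. rewrite pw_add, op1_assoc. reflexivity. Qed.

Lemma F_const (S : semigroup) m (f s : S) a b : pw s m = pw s (Datatypes.S m) ->
  a < b -> op1 (Some f) (pw s a) = op1 (Some f) (pw s b) ->
  op1 (Some f) (pw s a) = op1 (Some f) (pw s (Datatypes.S a)).
Proof.
  intros Hm Hab E.
  set (F := fun n => op1 (Some f) (pw s n)).
  assert (Hs : forall c, F (a + c) = F (b + c)).
  { intros c. unfold F. rewrite !F_add. fold (F a) (F b). unfold F. rewrite E. reflexivity. }
  assert (Hn : forall n x, F (a + x) = F (a + x + n * (b - a))).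
  { intros n x. induction n. f_equal; lia. rewrite IHn.
    replace (a + x + Datatypes.S n * (b - a)) with (b + (x + n * (b - a))) by lia.
    rewrite <- Hs. f_equal. lia. }
  assert (Hbig : forall n, m <= n -> F n = F (Datatypes.S n)).
  { intros n Hmn. unfold F. rewrite (pw_stab S s m Hm n Hmn), (pw_stab S s m Hm (Datatypes.S n)); auto. }
  change (F a = F (Datatypes.S a)).
  rewrite <- (Nat.add_0_r a) at 1. rewrite (Hn m 0).
  replace (Datatypes.S a) with (a + 1) by lia. rewrite (Hn m 1).
  replace (a + 1 + m * (b - a)) with (Datatypes.S (a + 0 + m * (b - a))) by lia.
  apply Hbig. nia.
Qed.

Lemma F_after (S : semigroup) (f s : S) a :
  op1 (Some f) (pw s a) = op1 (Some f) (pw s (Datatypes.S a)) ->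
  forall c, a <= c -> op1 (Some f) (pw s c) = op1 (Some f) (pw s a).
Proof.
  intros H c Hc. induction Hc; auto.
  rewrite pw_S, op1_assoc, IHHc, <- op1_assoc, <- pw_S. auto.
Qed.

Lemma star (V : cvariety) m k : 1 <= m ->
  (forall S, inV V S -> forall g : S, pw g m = pw g (Datatypes.S m)) ->
  (k = m \/ ~ inV V (Nsg (Datatypes.S k))) ->
  forall S, inV V S -> forall f s : S, sg_op S f f = f ->
  op1 (Some f) (pw s k) = op1 (Some f) (pw s (Datatypes.S k)).
Proof.
  intros Hm Hper Hk S HS f s Hf.
  destruct Hk as [->|Hn]. rewrite (Hper S HS s). reflexivity.
  apply NNPP; intros Hneq. apply Hn. split. apply Nsg_comm. intros [u v] He.
  apply (trunc_sat _ (Datatypes.S k)); [apply Nsg_comm|lia|apply Nsg_pw; lia|]. intros i.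
  set (N := bnd u v + i).
  set (h := fun x => if Nat.eq_dec x i then s else f).
  assert (Key : forall w, lmax (letters w) < N ->
    op1 (Some f) (Some (eval_word S h w)) = op1 (Some f) (pw s (cnt w i))).
  { intros w Hw. rewrite (eval_cprod S (proj1 HS) h w N Hw).
    rewrite (cprod_single S (proj1 HS) h (cnt w) (Some f) N i).
    - unfold h. destruct (Nat.eq_dec i i); [reflexivity|congruence].
    - unfold N, bnd; lia.
    - intros j _ Hj. unfold h. destruct (Nat.eq_dec j i); [congruence|]. apply idem_pw; auto. }
  assert (E : op1 (Some f) (pw s (cnt u i)) = op1 (Some f) (pw s (cnt v i))).
  { rewrite <- !Key by (unfold N, bnd; lia). f_equal. f_equal. apply (proj2 HS _ He). }
  assert (Hgen : forall a b, a < b -> op1 (Some f) (pw s a) = op1 (Some f) (pw s b) ->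
     Nat.min a (Datatypes.S k) = Nat.min b (Datatypes.S k)).
  { intros a b Hab Eab. destruct (Nat.le_gt_cases (Datatypes.S k) a). lia.
    exfalso. apply Hneq.
    assert (C := F_const S m f s a b (Hper S HS s) Hab Eab).
    rewrite (F_after S f s a C k), (F_after S f s a C (Datatypes.S k)); auto; lia. }
  destruct (Nat.lt_total (cnt u i) (cnt v i)) as [H|[H|H]].
  - apply Hgen; auto.
  - rewrite H; auto.
  - symmetry. apply Hgen; auto.
Qed.

(* ---------- Rees quotient by the ideal generated by idempotents ---------- *)
Section Rees.
Variable S : semigroup.
Hypothesis Hc : commutative_sg S.
Definition Jd (x : S) := exists f, sg_op S f f = f /\ sg_op S x f = x.
Lemma J_ideal x y : Jd x -> Jd (sg_op S x y).
Proof.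
  intros [f [Hf Hx]]. exists f; split; auto.
  rewrite <- sg_assoc, (Hc y f), sg_assoc, Hx. reflexivity.
Qed.
Lemma J_idealr x y : Jd y -> Jd (sg_op S x y).
Proof. intros H. rewrite Hc. apply J_ideal; auto. Qed.

Definition nrm (x : S) : option S :=
  if excluded_middle_informative (Jd x) then None else Some x.
Lemma nrm_J x : Jd x -> nrm x = None.
Proof. unfold nrm; destruct (excluded_middle_informative (Jd x)); tauto. Qed.
Lemma nrm_nJ x : ~ Jd x -> nrm x = Some x.
Proof. unfold nrm; destruct (excluded_middle_informative (Jd x)); tauto. Qed.

Definition okR (o : option S) : Prop := match o with None => True | Some x => ~ Jd x end.
Lemma ok_nrm x : okR (nrm x).
Proof. unfold nrm; destruct (excluded_middle_informative (Jd x)); simpl; auto. Qed.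

Definition ropt (a b : option S) : option S :=
  match a, b with Some x, Some y => nrm (sg_op S x y) | _, _ => None end.
Lemma ok_ropt a b : okR (ropt a b).
Proof. destruct a, b; simpl; auto. apply ok_nrm. Qed.

Lemma ropt_assoc a b c : ropt a (ropt b c) = ropt (ropt a b) c.
Proof.
  destruct a as [x|], b as [y|], c as [z|]; simpl; auto.
  - destruct (classic (Jd (sg_op S y z))) as [Hyz|Hyz];
    destruct (classic (Jd (sg_op S x y))) as [Hxy|Hxy].
    + rewrite (nrm_J _ Hyz), (nrm_J _ Hxy). reflexivity.
    + rewrite (nrm_J _ Hyz), (nrm_nJ _ Hxy). simpl. rewrite nrm_J; auto.
      rewrite <- sg_assoc. apply J_idealr; auto.
    + rewrite (nrm_nJ _ Hyz), (nrm_J _ Hxy). simpl. rewrite nrm_J; auto.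
      rewrite sg_assoc. apply J_ideal; auto.
    + rewrite (nrm_nJ _ Hyz), (nrm_nJ _ Hxy). simpl. rewrite sg_assoc. reflexivity.
  - destruct (nrm (sg_op S x y)); auto.
Qed.

Definition Rcar := {o : option S | okR o}.
Lemma R_eq (a b : Rcar) : proj1_sig a = proj1_sig b -> a = b.
Proof. destruct a, b; simpl; intros; subst. f_equal. apply proof_irrelevance. Qed.
Definition Rop (a b : Rcar) : Rcar := exist _ (ropt (proj1_sig a) (proj1_sig b)) (ok_ropt _ _).
Lemma Rop_assoc a b c : Rop a (Rop b c) = Rop (Rop a b) c.
Proof. apply R_eq; simpl. apply ropt_assoc. Qed.
Definition Rsg : semigroup := Semigroup Rcar Rop Rop_assoc (exist okR None I).

Lemma Rsg_comm : commutative_sg Rsg.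
Proof. intros a b. apply R_eq; simpl. destruct (proj1_sig a), (proj1_sig b); simpl; auto. rewrite Hc; auto. Qed.

Definition phi (x : S) : Rsg := exist okR (nrm x) (ok_nrm x).
Lemma phi_hom x y : phi (sg_op S x y) = sg_op Rsg (phi x) (phi y).
Proof.
  apply R_eq; simpl.
  destruct (classic (Jd x)) as [Hx|Hx]. rewrite (nrm_J x Hx), nrm_J; auto. apply J_ideal; auto.
  destruct (classic (Jd y)) as [Hy|Hy]. rewrite (nrm_J y Hy), nrm_J; auto.
  destruct (nrm x); auto. apply J_idealr; auto.
  rewrite (nrm_nJ x Hx), (nrm_nJ y Hy). reflexivity.
Qed.

Lemma phi_fold (h : nat -> S) l a :
  phi (fold_left (fun acc i => sg_op S acc (h i)) l a) =
  fold_left (fun acc i => sg_op Rsg acc (phi (h i))) l (phi a).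
Proof. revert a; induction l; intros; simpl; auto. rewrite IHl, phi_hom. reflexivity. Qed.

Lemma phi_eval (h : nat -> S) w : phi (eval_word S h w) = eval_word Rsg (fun i => phi (h i)) w.
Proof. unfold eval_word. apply phi_fold. Qed.

Variable j0 : S.
Hypothesis Hj0 : Jd j0.
Definition psi (r : Rsg) : S := match proj1_sig r with None => j0 | Some x => x end.
Lemma phi_psi r : phi (psi r) = r.
Proof.
  apply R_eq. destruct r as [[x|] Hr]; unfold psi; simpl.
  apply nrm_nJ; auto. apply nrm_J; auto.
Qed.

Lemma Rsg_sat e : satisfies S e -> satisfies Rsg e.
Proof.
  intros H h.
  replace h with (fun i => phi (psi (h i))) by (apply functional_extensionality; intros; apply phi_psi).
  rewrite <- !phi_eval. f_equal. apply H.
Qed.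

Lemma Rsg_zero (u v : word) :
  (forall h : nat -> S, Jd (eval_word S h u) /\ Jd (eval_word S h v)) -> satisfies Rsg (u, v).
Proof.
  intros H h. simpl.
  replace h with (fun i => phi (psi (h i))) by (apply functional_extensionality; intros; apply phi_psi).
  rewrite <- !phi_eval. destruct (H (fun i => psi (h i))) as [H1 H2].
  apply R_eq; simpl. rewrite !nrm_J; auto.
Qed.
End Rees.

Lemma spow_idem (S : semigroup) m : 1 <= m -> (forall g : S, pw g m = pw g (Datatypes.S m)) ->
  forall a : S, sg_op S (spow S a (m - 1)) (spow S a (m - 1)) = spow S a (m - 1).
Proof.
  intros Hm Hp a.
  assert (E : pw a m = Some (spow S a (m - 1))) by (destruct m; [lia|simpl; rewrite Nat.sub_0_r; auto]).
  assert (E2 : pw a (m + m) = pw a m) by (apply (pw_stab S a m (Hp a)); lia).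
  rewrite pw_add, E in E2. injection E2; auto.
Qed.

Lemma backward (V : cvariety) : combinatorial V ->
  (forall Y Z : cvariety, nil_variety Y -> veq V (vjoin Y Z) -> veq V Z) ->
  exists m, veq V (Cvar m).
Proof.
  intros Hcomb HP.
  destruct (period V Hcomb) as [m [Hm Hper]].
  destruct (find_k (fun j => j = 0 \/ inV V (Nsg j)) m (or_introl eq_refl)) as [k [Hkm [Qk Hk]]].
  assert (Hk' : k = m \/ ~ inV V (Nsg (Datatypes.S k))).
  { destruct Hk as [H|H]; auto. }
  assert (Hstar := star V m k Hm Hper Hk').
  set (nilw := (0, repeat 0 (m - 1)) : word).
  set (Y := fun e => V e \/ e = (wapp nilw (1, []), nilw)).
  exists k. apply (HP Y (Cvar k)).
  - intros T [Hc HT].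
    assert (Hz : forall a b : T, sg_op T (spow T a (m - 1)) b = spow T a (m - 1)).
    { intros a b. specialize (HT _ (or_intror eq_refl) (fun i => match i with 0 => a | _ => b end)).
      simpl in HT. rewrite eval_wapp in HT. unfold nilw in HT. rewrite eval_rep in HT. exact HT. }
    exists (spow T (sg_inh T) (m - 1)). split.
    + intros x; split. apply Hz. rewrite Hc; apply Hz.
    + intros x. exists (m - 1). rewrite <- (Hz x (spow T (sg_inh T) (m - 1))), Hc. apply Hz.
  - intros S. split.
    + intros HS. split. apply HS. intros [u v] [HY HC] h. simpl.
      assert (Htr : forall i, cnt u i = cnt v i \/ (k <= cnt u i /\ k <= cnt v i)).
      { intros i. destruct k. right; lia.
        assert (H1 : 1 <= Datatypes.S k) by lia.
        assert (E := Nsg_trunc (Datatypes.S k) u v H1 (HC _ (Nsg_C _ H1)) i). lia. }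
      assert (Hc := proj1 HS).
      assert (Hid := spow_idem S m Hm (Hper S HS)).
      assert (Hj0 : Jd S (spow S (sg_inh S) (m - 1))) by (eexists; split; apply Hid).
      assert (HR : inV Y (Rsg S Hc)).
      { split. apply Rsg_comm. intros e [HeV| ->].
        - apply Rsg_sat with (j0 := spow S (sg_inh S) (m - 1)); auto. apply (proj2 HS _ HeV).
        - apply Rsg_zero with (j0 := spow S (sg_inh S) (m - 1)); auto. intros g.
          rewrite eval_wapp. unfold nilw. rewrite eval_rep.
          assert (Jx : Jd S (spow S (g 0) (m - 1))) by (eexists; split; apply Hid).
          split; auto. apply J_ideal; auto. }
      assert (E := HY _ HR (fun i => phi S Hc (h i))). simpl in E.
      rewrite <- !phi_eval in E. apply (f_equal (@proj1_sig _ _)) in E. simpl in E.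
      assert (Fac : forall t, sg_op S t t = t ->
        sg_op S t (eval_word S h u) = sg_op S t (eval_word S h v)).
      { intros t Ht. assert (G := sat_counts S Hc h u v (Some t)).
        rewrite !op1_SS in G. injection G; auto. intros i.
        destruct (Htr i) as [Ei|[Ei1 Ei2]]. rewrite Ei; auto.
        assert (Hs := Hstar S HS t (h i) Ht).
        rewrite (F_after S t (h i) k Hs (cnt u i) Ei1), (F_after S t (h i) k Hs (cnt v i) Ei2).
        reflexivity. }
      set (U := eval_word S h u) in *. set (W := eval_word S h v) in *.
      destruct (classic (Jd S U)) as [HU|HU].
      * destruct (classic (Jd S W)) as [HW|HW].
        2:{ rewrite (nrm_J S U HU), (nrm_nJ S W HW) in E. discriminate. }
        destruct HU as [f [Hf HUf]]. destruct HW as [g [Hg HWg]].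
        assert (E1 := Fac f Hf). assert (E2 := Fac g Hg).
        assert (HWf : sg_op S W f = W).
        { assert (HW' : W = sg_op S U g) by (rewrite <- HWg at 1; rewrite Hc, <- E2, Hc; auto).
          rewrite HW' at 1. rewrite <- sg_assoc, (Hc g f), sg_assoc, HUf. auto. }
        rewrite <- HUf, Hc, E1, Hc. auto.
      * destruct (classic (Jd S W)) as [HW|HW].
        { rewrite (nrm_nJ S U HU), (nrm_J S W HW) in E. discriminate. }
        rewrite (nrm_nJ S U HU), (nrm_nJ S W HW) in E. injection E; auto.
    + intros HS. split. apply HS. intros e He. apply (proj2 HS). split.
      * intros T HT. apply (proj2 HT). left; auto.
      * intros T HT. destruct k. apply trivial_sat, Cvar0_trivial; auto.
        destruct Qk as [Hk0|HN]. lia. destruct e as [u v].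
        apply (trunc_sat T (Datatypes.S k)). apply HT. lia. apply Cvar_pw; auto; lia.
        apply Nsg_trunc. lia. apply (proj2 HN _ He).
Qed.


Theorem mainTheorem7 (V : cvariety) :
  (exists m : nat, veq V (Cvar m)) <->
  (combinatorial V /\
   forall Y Z : cvariety, nil_variety Y -> veq V (vjoin Y Z) -> veq V Z).
Proof.
  split.
  - intros [m Hm]. apply (forward V m Hm).
  - intros [Hc HP]. apply backward; auto.
Qed.
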